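(* Let $n_x, d \in \mathbb{Z}^+$, let $\kappa_{\max} > 1$, let $\mathsf{X} \in \mathbb{R}^{n_x \times d}$ be arbitrary, and let $\tilde{\mathsf{K}}_\nabla(\boldsymbol{\gamma})$ be the modified gradient-enhanced Gaussian kernel matrix defined in the context. Set $$\eta_{\tilde{\mathsf{K}}_\nabla}(n_x, d) = \frac{1 + (n_x-1) \frac{1 + \sqrt{1 + 4d}}{2} e^{-\frac{1 + 2d - \sqrt{1 + 4d}}{4d}}}{\kappa_{\max} - 1}.$$ Then for every $\boldsymbol{\gamma} = (\gamma_1,\ldots,\gamma_d)$ with all $\gamma_i > 0$, the $\ell_2$ condition number satisfies $\kappa\!\left(\tilde{\mathsf{K}}_\nabla(\boldsymbol{\gamma}) + \eta_{\tilde{\mathsf{K}}_\nabla}(n_x,d)\, \mathsf{I}\right) \le \kappa_{\max}$.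
   Context: Write $\tilde{x}_{ij} = \gamma_j x_{ij}$, where $x_{ij}$ is the $(i,j)$ entry of $\mathsf{X}$, and $\tilde{\mathbf{x}}_{i:} = (\tilde{x}_{i1},\ldots,\tilde{x}_{id})$. Define $n_x\times n_x$ matrices $\mathsf{K}_{ab} = \exp\!\left(-\tfrac12 \|\tilde{\mathbf{x}}_{a:} - \tilde{\mathbf{x}}_{b:}\|_2^2\right)$ and $(\tilde{\mathsf{R}}_j)_{ab} = \tilde{x}_{aj} - \tilde{x}_{bj}$. $\tilde{\mathsf{K}}_\nabla(\boldsymbol{\gamma})$ is the symmetric $n_x(d+1)\times n_x(d+1)$ block matrix with blocks indexed by $0,\ldots,d$: block $(0,0)$ is $\mathsf{K}$; block $(0,j)$ has entries $(\tilde{\mathsf{R}}_j)_{ab}\mathsf{K}_{ab}$; block $(i,0)$ has entries $-(\tilde{\mathsf{R}}_i)_{ab}\mathsf{K}_{ab}$; block $(i,j)$, $i,j\ge1$, has entries $(\delta_{ij} - (\tilde{\mathsf{R}}_i)_{ab}(\tilde{\mathsf{R}}_j)_{ab})\mathsf{K}_{ab}$. Equivalently $\tilde{\mathsf{K}}_\nabla = \mathsf{P}^{-1}\mathsf{K}_\nabla\mathsf{P}^{-1}$, where $\mathsf{K}_\nabla$ is the (positive semidefinite) gradient-enhanced kernel matrix of the Gaussian kernel $k(\mathbf{x},\mathbf{y}) = e^{-\frac12\sum_i \gamma_i^2(x_i-y_i)^2}$ at the rows of $\mathsf{X}$ (the covariance matrix of the function values and partial derivatives at these points) and $\mathsf{P}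 = \mathrm{diag}(\mathbf{1}_{n_x}, \gamma_1\mathbf{1}_{n_x},\ldots,\gamma_d\mathbf{1}_{n_x})$. $\mathsf{I}$ is the identity matrix and $\kappa(\cdot)$ the $\ell_2$ condition number. *)

(* Defs.v *)
From mathcomp Require Import all_boot all_order all_algebra.
From mathcomp Require Import all_classical all_reals all_analysis.
Set Implicit Arguments. Unset Strict Implicit. Unset Printing Implicit Defensive.
Import Order.TTheory GRing.Theory Num.Theory.
Local Open Scope classical_set_scope.
Local Open Scope ring_scope.

Section GEKernel.
Variables (R : realType) (n d : nat).
Variables (X : 'M[R]_(n, d)) (gamma : 'rV[R]_d).

Definition xt (a : 'I_n) (j : 'I_d) : R := gamma 0 j * X a j.

Definition Kg (a b : 'I_n) : R :=
  expR (- (1/2) * \sum_(j < d) (xt a j - xt b j) ^+ 2).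

Definition Rt (j : 'I_d) (a b : 'I_n) : R := xt a j - xt b j.

(* block (i,j), blocks indexed by 0..d; block index k >= 1 corresponds to
   column k-1 of X (i.e. unlift ord0 k = Some (k-1)). *)
Definition Kblock (i j : 'I_d.+1) : 'M[R]_(n, n) :=
  \matrix_(a, b)
    match unlift ord0 i, unlift ord0 j with
    | None, None => Kg a b
    | None, Some j' => Rt j' a b * Kg a b
    | Some i', None => - (Rt i' a b * Kg a b)
    | Some i', Some j' => ((i' == j')%:R - Rt i' a b * Rt j' a b) * Kg a b
    end.

Definition Ktilde : 'M[R]_(\sum_(i < d.+1) n) :=
  @mxblock R d.+1 d.+1 (fun _ => n) (fun _ => n) Kblock.

End GEKernel.

Definition vnorm2 {R : realType} {m : nat} (x : 'cV[R]_m) : R :=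
  Num.sqrt (\sum_(i < m) x i 0 ^+ 2).

Definition opnorm2 {R : realType} {m : nat} (A : 'M[R]_m) : R :=
  sup [set vnorm2 (A *m x) | x in [set x : 'cV[R]_m | vnorm2 x = 1]].

Definition cond2 {R : realType} {m : nat} (A : 'M[R]_m) : R :=
  opnorm2 A * opnorm2 (invmx A).

Definition eta_K {R : realType} (n d : nat) (kmax : R) : R :=
  (1 + (n%:R - 1) * ((1 + Num.sqrt (1 + 4 * d%:R)) / 2)
       * expR (- ((1 + 2 * d%:R - Num.sqrt (1 + 4 * d%:R)) / (4 * d%:R))))
  / (kmax - 1).

(* Main.v *)
Require Import Defs.
From mathcomp Require Import all_boot all_order all_algebra.
From mathcomp Require Import all_classical all_reals all_analysis.
From mathcomp Require Import ring lra.
Import Order.TTheory GRing.Theory Num.Theory.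
Import numFieldNormedType.Exports.
Local Open Scope classical_set_scope.
Local Open Scope ring_scope.
Section Core.
Variable R : realType.

Definition dot {d} (u v : 'I_d -> R) := \sum_(j < d) u j * v j.

Definition pairE (k : nat) (G Pa Pb A B C : R) :=
  Pa * Pb * G ^+ k + k%:R * (Pa * A + Pb * B + C) * G ^+ k.-1
  + (k * k.-1)%:R * A * B * G ^+ k.-2.

Lemma pairE_alg k G Pa Pb A B C :
  let al := G ^+ k * (Pa * Pb) + k%:R * G ^+ k.-1 * (Pa * A + Pb * B + C)
            + (k * k.-1)%:R * G ^+ k.-2 * (A * B) in
  let be := G ^+ k * Pa + k%:R * G ^+ k.-1 * B in
  let ga := G ^+ k * Pb + k%:R * G ^+ k.-1 * A in
  let de := G ^+ k in
  al * G + be * A + ga * B + de * C = pairE k.+1 G Pa Pb A B C.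
Proof.
rewrite /pairE /=; case: k => [|[|k]] /=.
- rewrite !mul0r; ring.
- rewrite !expr0 !expr1; ring.
- rewrite !exprS; ring.
Qed.

Lemma pairE_j k G Pa Pb A B C xa xb wa wb :
  pairE k G (Pa * xa + wa) (Pb * xb + wb) (xb * A) (xa * B) (xa * xb * C) =
  (G ^+ k * (Pa * Pb) + k%:R * G ^+ k.-1 * (Pa * A + Pb * B + C)
            + (k * k.-1)%:R * G ^+ k.-2 * (A * B)) * (xa * xb)
  + (G ^+ k * Pa + k%:R * G ^+ k.-1 * B) * (xa * wb)
  + (G ^+ k * Pb + k%:R * G ^+ k.-1 * A) * (xb * wa)
  + G ^+ k * (wa * wb).
Proof. rewrite /pairE; ring. Qed.

Lemma dotZr d (u v : 'I_d -> R) c : dot u (fun i => c * v i) = c * dot u v.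
Proof. rewrite /dot mulr_sumr; apply: eq_bigr => i _; ring. Qed.

Lemma dotZZ d (u v : 'I_d -> R) c e :
  dot (fun i => c * u i) (fun i => e * v i) = c * e * dot u v.
Proof. rewrite /dot mulr_sumr; apply: eq_bigr => i _; ring. Qed.

Lemma sum4 d (u v w z : 'I_d -> R) al be ga de :
  \sum_(j < d) (al * u j + be * v j + ga * w j + de * z j) =
  al * \sum_j u j + be * \sum_j v j + ga * \sum_j w j + de * \sum_j z j.
Proof. by rewrite !big_split /= -!mulr_sumr. Qed.

Section Form.
Variables (n d : nat) (x : 'I_n -> 'I_d -> R).

Definition form (k : nat) (P : 'I_n -> R) (W : 'I_n -> 'I_d -> R) :=
  \sum_(a < n) \sum_(b < n) pairE k (dot (x a) (x b)) (P a) (P b)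
     (dot (x a) (W b)) (dot (x b) (W a)) (dot (W a) (W b)).

Definition Pj (P : 'I_n -> R) (W : 'I_n -> 'I_d -> R) (j : 'I_d) :=
  fun a => P a * x a j + W a j.
Definition Wj (W : 'I_n -> 'I_d -> R) (j : 'I_d) :=
  fun a i => x a j * W a i.

Lemma pair_step k P W a b :
  pairE k.+1 (dot (x a) (x b)) (P a) (P b)
     (dot (x a) (W b)) (dot (x b) (W a)) (dot (W a) (W b)) =
  \sum_(j < d) pairE k (dot (x a) (x b)) (Pj P W j a) (Pj P W j b)
     (dot (x a) (Wj W j b)) (dot (x b) (Wj W j a)) (dot (Wj W j a) (Wj W j b)).
Proof.
rewrite -pairE_alg.
under eq_bigr => j _ do rewrite /Wj /Pj dotZr dotZr dotZZ pairE_j.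
rewrite sum4 /dot.
congr (_ + _ + _ + _); congr (_ * _); apply: eq_bigr => j _; ring.
Qed.

Lemma form_step k P W : form k.+1 P W = \sum_(j < d) form k (Pj P W j) (Wj W j).
Proof.
rewrite /form.
under eq_bigr => a _ do under eq_bigr => b _ do rewrite pair_step.
under eq_bigr => a _ do rewrite exchange_big.
by rewrite exchange_big.
Qed.

Lemma form_ge0 k P W : 0 <= form k P W.
Proof.
elim: k P W => [|k IH] P W.
  rewrite /form /pairE /=.
  under eq_bigr => a _ do under eq_bigr => b _ do rewrite !mul0r !addr0 expr0 mulr1.
  under eq_bigr => a _ do rewrite -mulr_sumr.
  by rewrite -mulr_suml -expr2 sqr_ge0.
rewrite form_step; apply: sumr_ge0 => j _; exact: IH.
Qed.
End Form.

Definition S (m : nat) (g : R) := \sum_(k < m) g ^+ k / k`!%:R.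

Lemma S_cvg g : S m g @[m --> \oo] --> expR g.
Proof.
have H := is_cvg_series_exp_coeff g.
have -> : (fun m => S m g) = series (exp_coeff g).
  by apply/funext => m; rewrite /S /series /= big_mkord.
exact: H.
Qed.

Lemma L1 M g : \sum_(k < M.+1) k%:R * g ^+ k.-1 / k`!%:R = S M g.
Proof.
rewrite big_ord_recl /= mul0r mul0r add0r /S; apply: eq_bigr => i _.
rewrite (_ : bump 0 i = i.+1) // add0n factS natrM.
have h1 : (i.+1%:R : R) != 0 by rewrite pnatr_eq0.
have h2 : (i`!%:R : R) != 0 by rewrite pnatr_eq0 -lt0n fact_gt0.
move: (nat_of_ord i) h1 h2 => k h1 h2. move: (g ^+ k) (k.+1%:R : R) (k`!%:R : R) h1 h2 => gk a b h1 h2. by field; rewrite h1 h2.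
Qed.

Lemma L2 M g : \sum_(k < M.+2) (k * k.-1)%:R * g ^+ k.-2 / k`!%:R = S M g.
Proof.
rewrite big_ord_recl /= mul0r mul0r add0r.
rewrite big_ord_recl /= mul0r mul0r add0r /S; apply: eq_bigr => i _.
rewrite /bump /= !add1n !factS !natrM.
have h1 : (i.+1%:R : R) != 0 by rewrite pnatr_eq0.
have h3 : (i.+2%:R : R) != 0 by rewrite pnatr_eq0.
have h2 : (i`!%:R : R) != 0 by rewrite pnatr_eq0 -lt0n fact_gt0.
rewrite !add0n. move: (nat_of_ord i) h1 h2 h3 => k h1 h2 h3. move: (g ^+ k) (k.+1%:R : R) (k.+2%:R : R) (k`!%:R : R) h1 h2 h3 => gk a c b h1 h2 h3. by field; rewrite h1 h2 h3.
Qed.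

Lemma pair_psum M G Pa Pb A B C :
  \sum_(k < M.+2) pairE k G Pa Pb A B C / k`!%:R =
  Pa * Pb * S M.+2 G + (Pa * A + Pb * B + C) * S M.+1 G + A * B * S M G.
Proof.
rewrite /pairE.
under eq_bigr => k _ do rewrite !mulrDl.
rewrite !big_split /=.
congr (_ + _ + _).
- rewrite /S mulr_sumr; apply: eq_bigr => k _; ring.
- rewrite -L1 mulr_sumr; apply: eq_bigr => k _; ring.
- rewrite -L2 mulr_sumr; apply: eq_bigr => k _; ring.
Qed.

Lemma cvg_sum_ord m (f : 'I_m -> nat -> R) (l : 'I_m -> R) :
  (forall i, f i M @[M --> \oo] --> l i) ->
  \sum_(i < m) f i M @[M --> \oo] --> \sum_(i < m) l i.
Proof.
move=> H; apply: cvg_big => //; exact: add_continuous.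
Qed.

Theorem psd_core n d (x : 'I_n -> 'I_d -> R) (P : 'I_n -> R) (W : 'I_n -> 'I_d -> R) :
  0 <= \sum_(a < n) \sum_(b < n) expR (dot (x a) (x b)) *
        ((P a + dot (x b) (W a)) * (P b + dot (x a) (W b)) + dot (W a) (W b)).
Proof.
pose u M := \sum_(k < M.+2) @form n d x k P W / k`!%:R.
have u_ge0 M : 0 <= u M.
  by apply: sumr_ge0 => k _; apply: divr_ge0 => //; exact: form_ge0.
have uE M : u M = \sum_(a < n) \sum_(b < n)
   (P a * P b * S M.+2 (dot (x a) (x b))
    + (P a * dot (x a) (W b) + P b * dot (x b) (W a) + dot (W a) (W b)) * S M.+1 (dot (x a) (x b))
    + dot (x a) (W b) * dot (x b) (W a) * S M (dot (x a) (x b))).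
  rewrite /u /form.
  under eq_bigr => k _ do rewrite mulr_suml.
  rewrite exchange_big; apply: eq_bigr => a _.
  under eq_bigr => k _ do rewrite mulr_suml.
  rewrite exchange_big; apply: eq_bigr => b _.
  by rewrite pair_psum.
have Sk g k : S (M + k)%N g @[M --> \oo] --> expR g.
  have := S_cvg g; rewrite -(cvg_shiftn k); exact.
have cv : u M @[M --> \oo] --> \sum_(a < n) \sum_(b < n)
   (P a * P b * expR (dot (x a) (x b))
    + (P a * dot (x a) (W b) + P b * dot (x b) (W a) + dot (W a) (W b)) * expR (dot (x a) (x b))
    + dot (x a) (W b) * dot (x b) (W a) * expR (dot (x a) (x b))).
  under eq_cvg do rewrite uE.
  apply: cvg_sum_ord => a; apply: cvg_sum_ord => b.
  apply: cvgD; first apply: cvgD.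
  - apply: cvgMl_tmp; have := Sk (dot (x a) (x b)) 2%N.
    by under eq_cvg do rewrite addn2.
  - apply: cvgMl_tmp; have := Sk (dot (x a) (x b)) 1%N.
    by under eq_cvg do rewrite addn1.
  - apply: cvgMl_tmp; exact: S_cvg.
have H : 0 <= \sum_(a < n) \sum_(b < n)
   (P a * P b * expR (dot (x a) (x b))
    + (P a * dot (x a) (W b) + P b * dot (x b) (W a) + dot (W a) (W b)) * expR (dot (x a) (x b))
    + dot (x a) (W b) * dot (x b) (W a) * expR (dot (x a) (x b))).
  by apply: (cvgr_to_ge cv); apply: nearW => M; exact: u_ge0.
move: H; congr (_ <= _); apply: eq_bigr => a _; apply: eq_bigr => b _; ring.
Qed.
End Core.
Arguments dot {R d}.
Section Ineq.
Variable R : realType.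

Lemma dot_ge0 d (u : 'I_d -> R) : 0 <= dot u u.
Proof. by apply: sumr_ge0 => j _; rewrite -expr2 sqr_ge0. Qed.

Lemma CS d (r u : 'I_d -> R) : (dot r u) ^+ 2 <= dot r r * dot u u.
Proof.
pose g j k := r j * r j * (u k * u k) - r j * u j * (r k * u k).
have E : \sum_(j < d) \sum_(k < d) (r j * u k - r k * u j) ^+ 2 =
         2 * (dot r r * dot u u - dot r u ^+ 2).
  have -> : \sum_(j < d) \sum_(k < d) (r j * u k - r k * u j) ^+ 2 =
            \sum_(j < d) \sum_(k < d) g j k + \sum_(j < d) \sum_(k < d) g k j.
    rewrite -big_split /=; apply: eq_bigr => j _.
    rewrite -big_split /=; apply: eq_bigr => k _; rewrite /g; ring.
  rewrite [X in _ + X = _]exchange_big /= mulr2n -mulr2n mulr_natl.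
  rewrite /dot expr2 !mulr_suml; congr (_ *+ 2).
  rewrite -sumrB; apply: eq_bigr => j _.
  rewrite !mulr_sumr -sumrB; apply: eq_bigr => k _; rewrite /g; ring.
have : 0 <= 2 * (dot r r * dot u u - dot r u ^+ 2).
  rewrite -E; apply: sumr_ge0 => j _; apply: sumr_ge0 => k _; exact: sqr_ge0.
rewrite pmulr_rge0 // subr_ge0 //.
Qed.

Definition cst (d : nat) : R :=
  (1 + Num.sqrt (1 + 4 * d%:R)) / 2
  * expR (- ((1 + 2 * d%:R - Num.sqrt (1 + 4 * d%:R)) / (4 * d%:R))).

Lemma C1 (d : nat) (t S : R) : (0 < d)%N -> 0 <= t -> 0 <= S ->
  t ^+ 2 <= d%:R * S -> (1 + t) * expR (- (1/2) * S) <= cst d.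
Proof.
move=> d0 t0 S0 htS.
rewrite /cst.
set dd := (d%:R : R).
have dd1 : 1 <= dd by rewrite /dd ler1n.
set D := Num.sqrt (1 + 4 * dd).
have hD2 : D ^+ 2 = 1 + 4 * dd by rewrite /D sqr_sqrtr //; lra.
have hD0 : 0 <= D by exact: sqrtr_ge0.
set E := (1 + 2 * dd - D) / (4 * dd).
set m := (1 + D) / 2.
have m0 : 0 < m by rewrite /m; lra.
have hD1 : 1 < D.
  have : 1 < D ^+ 2 by rewrite hD2; lra.
  by rewrite expr2; nra.
have key1 : m * E = m - 1 - dd / (2 * m).
  have hd : dd = (D ^+ 2 - 1) / 4 by rewrite hD2; field.
  rewrite /E /m hd.
  have h1 : D - 1 != 0 by rewrite subr_eq0 gt_eqF.
  have h2 : 1 + D != 0 by rewrite gt_eqF //; lra.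
  have h3 : D ^+ 2 - 1 != 0 by rewrite subr_eq0 gt_eqF //; nra.
  by field; rewrite ?h1 ?h2 ?h3.
have key2 : 2 * t <= m * S + dd / m.
  have dd0 : 0 < dd by lra.
  have : 0 <= m / dd * (t - dd / m) ^+ 2.
    by apply: mulr_ge0; [apply: divr_ge0; lra | exact: sqr_ge0].
  have e : m / dd * (t - dd / m) ^+ 2 = m / dd * t ^+ 2 - 2 * t + dd / m.
    by field; rewrite ?gt_eqF.
  have : m / dd * t ^+ 2 <= m * S.
    have hh : m / dd * t ^+ 2 <= m / dd * (dd * S) by apply: ler_wpM2l => //; apply: divr_ge0; lra.
    by apply: (le_trans hh); rewrite le_eqVlt; apply/orP; left; apply/eqP; field; rewrite gt_eqF.
  lra.
have key3 : 1 + t <= m * (1 + (S / 2 - E)).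
  have e2 : m * (1 + (S / 2 - E)) = m + m * S / 2 - m * E by ring.
  rewrite e2 key1.
  have e3 : m + m * S / 2 - (m - 1 - dd / (2 * m)) = 1 + (m * S + dd / m) / 2.
    by field; rewrite gt_eqF.
  rewrite e3; lra.
have key4 : m * (1 + (S / 2 - E)) <= m * expR (S / 2 - E).
  by rewrite ler_pM2l //; exact: expR_ge1Dx.
have e4 : expR (S / 2 - E) = expR (- E) * expR (S / 2).
  by rewrite -expRD addrC.
have k0 : 0 < expR (- (1/2) * S) := expR_gt0 _.
have e5 : expR (S / 2) * expR (- (1/2) * S) = 1.
  by rewrite -expRD (_ : S / 2 + - (1/2) * S = 0) ?expR0 //; lra.
have := le_trans key3 key4.
rewrite e4 -(ler_pM2r k0) => H.
apply: (le_trans H); rewrite -!mulrA e5 mulr1 //.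
Qed.

Lemma e_ge : 5 / 2 <= expR (1 : R).
Proof.
have -> : (1 : R) = 8%:R * (1/8) by rewrite mulrC div1r mulVf // pnatr_eq0.
rewrite expRM_natl.
have h : 9 / 8 <= expR (1/8 : R) by have := expR_ge1Dx (1/8 : R); lra.
apply: (le_trans _ (lerXn2r 8 _ _ h)); last 2 first.
- by rewrite nnegrE; lra.
- by rewrite nnegrE expR_ge0.
rewrite !exprS expr0; lra.
Qed.

Lemma C3 (u S : R) : 0 <= u -> u ^+ 2 <= S -> 2 < S ->
  expR (- (1/2) * S) * (u + S - 1) <= 1.
Proof.
move=> u0 uS S2.
have hu : u <= S / 4 + 1 by have := sqr_ge0 (u - 2); rewrite expr2 in uS *; nra.
have h1 : S / 2 <= expR (S / 2 - 1) by have := expR_ge1Dx (S / 2 - 1); lra.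
have h2 : expR (S / 2) = expR 1 * expR (S / 2 - 1) by rewrite -expRD; congr expR; lra.
have he := e_ge.
have h3 : 5 / 4 * S <= expR (S / 2).
  rewrite h2; have : 0 <= S / 2 by lra.
  nra.
have k0 : 0 < expR (- (1/2) * S) := expR_gt0 _.
have e5 : expR (- (1/2) * S) * expR (S / 2) = 1.
  by rewrite -expRD (_ : - (1/2) * S + S / 2 = 0) ?expR0 //; lra.
have : expR (- (1/2) * S) * (u + S - 1) <= expR (- (1/2) * S) * expR (S / 2) by rewrite ler_pM2l //; lra.
by rewrite e5.
Qed.

Lemma amgm3 (v r w : R) : v * (r * w) <= `|r| * ((v ^+ 2 + w ^+ 2) / 2).
Proof.
case: (lerP 0 r) => hr.
  rewrite ger0_norm //.
  have := mulr_ge0 hr (sqr_ge0 (v - w)); rewrite !expr2; nra.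
rewrite ltr0_norm //.
have hr2 : 0 <= - r by lra.
have := mulr_ge0 hr2 (sqr_ge0 (v + w)); rewrite !expr2; nra.
Qed.

Lemma F4 d (r w w' : 'I_d -> R) lam : 1 <= lam -> dot r r - 1 <= lam ->
  dot w w' - dot r w * dot r w' <= lam * (dot w w + dot w' w') / 2.
Proof.
move=> l1 lS.
pose p := fun j => w j + w' j.
pose q := fun j => w j - w' j.
have ep : dot p p = dot w w + 2 * dot w w' + dot w' w'.
  rewrite /dot mulr_sumr -!big_split /=; apply: eq_bigr => j _; rewrite /p; ring.
have eqq : dot q q = dot w w - 2 * dot w w' + dot w' w'.
  rewrite /dot mulr_sumr -sumrB -big_split /=; apply: eq_bigr => j _; rewrite /q; ring.
have erp : dot r p = dot r w + dot r w'.
  rewrite /dot -big_split /=; apply: eq_bigr => j _; rewrite /p; ring.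
have erq : dot r q = dot r w - dot r w'.
  rewrite /dot -sumrB; apply: eq_bigr => j _; rewrite /q; ring.
have c1 := CS _ r p. have c2 := CS _ r q.
have p0 := dot_ge0 _ p. have q0 := dot_ge0 _ q.
rewrite ep erp in c1 p0; rewrite eqq erq in c2 q0.
have S0 := dot_ge0 _ r.
have h1 := mulr_ge0 (_ : 0 <= lam - 1) p0.
have h2 := mulr_ge0 (_ : 0 <= lam - dot r r + 1) q0.
have s1 := sqr_ge0 (dot r w + dot r w').
move: (h1 ltac:(lra)) (h2 ltac:(lra)) => {h1 h2} h1 h2.
rewrite !expr2 in c1 c2 s1.
nra.
Qed.


Lemma PB d (r w w' : 'I_d -> R) (v v' c lam : R) :
  1 <= lam -> dot r r - 1 <= lam ->
  expR (- (1/2) * dot r r) * (1 + \sum_j `|r j|) <= c ->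
  (forall j, expR (- (1/2) * dot r r) * (`|r j| + lam) <= c) ->
  expR (- (1/2) * dot r r) * ((v - dot r w) * (v' + dot r w') + dot w w')
    <= c / 2 * (v ^+ 2 + dot w w + v' ^+ 2 + dot w' w').
Proof.
set k := expR (- (1/2) * dot r r).
move=> l1 lS H0 Hj.
have k0 : 0 < k := expR_gt0 _.
pose B := (v ^+ 2 + v' ^+ 2) / 2 * (1 + \sum_j `|r j|)
          + \sum_j (`|r j| + lam) * ((w j ^+ 2 + w' j ^+ 2) / 2).
have step1 : (v - dot r w) * (v' + dot r w') + dot w w' <= B.
  have e : (v - dot r w) * (v' + dot r w') + dot w w' =
           v * v' + (v * dot r w' - v' * dot r w) + (dot w w' - dot r w * dot r w') by ring.
  rewrite e.
  have f1 : v * v' <= (v ^+ 2 + v' ^+ 2) / 2 by have := sqr_ge0 (v - v'); rewrite !expr2; nra.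
  have f23 : v * dot r w' - v' * dot r w <=
     \sum_j `|r j| * ((v ^+ 2 + v' ^+ 2) / 2 + (w j ^+ 2 + w' j ^+ 2) / 2).
    rewrite /dot !mulr_sumr -sumrB; apply: ler_sum => j _.
    have a1 := amgm3 v (r j) (w' j).
    have a2 := amgm3 (- v') (r j) (w j).
    rewrite sqrrN in a2.
    have -> : `|r j| * ((v ^+ 2 + v' ^+ 2) / 2 + (w j ^+ 2 + w' j ^+ 2) / 2) =
              `|r j| * ((v ^+ 2 + w' j ^+ 2) / 2) + `|r j| * ((v' ^+ 2 + w j ^+ 2) / 2) by ring.
    have -> : v * (r j * w' j) - v' * (r j * w j) = v * (r j * w' j) + (- v') * (r j * w j) by ring.
    exact: lerD.
  have f4 := F4 _ r w w' _ l1 lS.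
  have eB : B = (v ^+ 2 + v' ^+ 2) / 2
     + \sum_j `|r j| * ((v ^+ 2 + v' ^+ 2) / 2 + (w j ^+ 2 + w' j ^+ 2) / 2)
     + lam * (dot w w + dot w' w') / 2.
    have e1 : lam * (dot w w + dot w' w') / 2 = \sum_j lam * ((w j ^+ 2 + w' j ^+ 2) / 2).
      rewrite /dot -big_split /= mulr_sumr mulr_suml; apply: eq_bigr => j _; rewrite !expr2; ring.
    rewrite e1 /B mulrDr mulr1 mulr_sumr -!addrA; congr (_ + _).
    rewrite -!big_split /=; apply: eq_bigr => j _; ring.
  rewrite eB; lra.
have step2 : k * B <= c / 2 * (v ^+ 2 + dot w w + v' ^+ 2 + dot w' w').
  have eR : c / 2 * (v ^+ 2 + dot w w + v' ^+ 2 + dot w' w') =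
      (v ^+ 2 + v' ^+ 2) / 2 * c + \sum_j c * ((w j ^+ 2 + w' j ^+ 2) / 2).
    have e2 : \sum_j c * ((w j ^+ 2 + w' j ^+ 2) / 2) = c / 2 * (dot w w + dot w' w').
      rewrite /dot -big_split /= mulr_sumr; apply: eq_bigr => j _; rewrite !expr2; ring.
    rewrite e2; ring.
  rewrite eR /B mulrDr mulr_sumr.
  apply: lerD.
    rewrite mulrCA; apply: ler_wpM2l => //.
    by apply: divr_ge0 => //; apply: addr_ge0; exact: sqr_ge0.
  apply: ler_sum => j _; rewrite [k * _]mulrA; apply: ler_wpM2r; last exact: Hj.
  by apply: divr_ge0 => //; apply: addr_ge0; exact: sqr_ge0.
apply: le_trans step2; by rewrite ler_pM2l.
Qed.

Lemma term_le_sum d (f : 'I_d -> R) j : (forall i, 0 <= f i) -> f j <= \sum_i f i.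
Proof.
move=> f0; rewrite (bigD1 j) //= lerDl; apply: sumr_ge0 => i _; exact: f0.
Qed.

Lemma cst_ge1 d : (0 < d)%N -> 1 <= cst d.
Proof.
move=> d0; have := @C1 d 0 0 d0 (lexx 0) (lexx 0).
rewrite expr0n /= mulr0 addr0 mulr0 expR0 mulr1; apply; exact: lexx.
Qed.

Lemma PB2 d (r w w' : 'I_d -> R) (v v' : R) : (0 < d)%N ->
  expR (- (1/2) * dot r r) * ((v - dot r w) * (v' + dot r w') + dot w w')
    <= cst d / 2 * (v ^+ 2 + dot w w + v' ^+ 2 + dot w' w').
Proof.
move=> d0.
set S := dot r r.
set k := expR (- (1/2) * S).
have S0 : 0 <= S := dot_ge0 _ r.
have t0 : 0 <= \sum_j `|r j| by apply: sumr_ge0 => j _.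
have tS : (\sum_j `|r j|) ^+ 2 <= d%:R * S.
  have := CS _ (fun j => `|r j|) (fun _ => 1).
  have -> : dot (fun j => `|r j|) (fun _ => 1) = \sum_j `|r j|.
    by apply: eq_bigr => j _; rewrite mulr1.
  have -> : dot (fun j => `|r j|) (fun j => `|r j|) = S.
    by apply: eq_bigr => j _; rewrite -normrM -expr2 ger0_norm ?sqr_ge0 // expr2.
  have -> : dot (fun _ : 'I_d => 1) (fun _ : 'I_d => 1) = (d%:R : R).
    by rewrite /dot; under eq_bigr do rewrite mulr1; rewrite sumr_const card_ord.
  by rewrite mulrC.
have H0 : k * (1 + \sum_j `|r j|) <= cst d by rewrite mulrC; exact: C1.
have c1 := cst_ge1 d d0.
have rjS j : r j ^+ 2 <= S.
  by rewrite expr2; apply: (term_le_sum _ (fun i => r i * r i)) => i; rewrite -expr2 sqr_ge0.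
have rjt j : `|r j| <= \sum_i `|r i| by apply: (term_le_sum _ (fun i => `|r i|)).
have k0 : 0 < k := expR_gt0 _.
case: (lerP S 2) => hS.
  apply: (@PB d r w w' v v' (cst d) 1); rewrite -/S -/k //; first lra.
  move=> j; apply: le_trans H0; rewrite ler_pM2l //; have := rjt j; lra.
apply: (@PB d r w w' v v' (cst d) (S - 1)); rewrite -/S -/k //; first lra.
move=> j; apply: le_trans c1.
have h2 : `|r j| ^+ 2 <= S by rewrite real_normK ?num_real.
have := C3 _ _ (normr_ge0 (r j)) h2 hS.
by rewrite -/k (_ : `|r j| + S - 1 = `|r j| + (S - 1)) //; ring.
Qed.
End Ineq.
Section Mat.
Variable R : realType.
Variable N : nat.
Implicit Types (x y u : 'cV[R]_N) (A : 'M[R]_N).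

Definition sq x := \sum_(p < N) x p 0 ^+ 2.
Definition bf A x y := \sum_(p < N) \sum_(q < N) x p 0 * A p q * y q 0.

Lemma sq_ge0 x : 0 <= sq x.
Proof. by apply: sumr_ge0 => p _; exact: sqr_ge0. Qed.

Lemma bfE A x y : bf A x y = \sum_(p < N) x p 0 * (A *m y) p 0.
Proof.
apply: eq_bigr => p _; rewrite mxE mulr_sumr; apply: eq_bigr => q _; ring.
Qed.

Lemma bf_sym A x y : (forall p q, A p q = A q p) -> bf A x y = bf A y x.
Proof.
move=> hA; rewrite /bf exchange_big; apply: eq_bigr => p _; apply: eq_bigr => q _.
rewrite hA; ring.
Qed.

Lemma bf_comb A a b u x :
  bf A (b *: u - a *: x) (b *: u - a *: x) =
  b ^+ 2 * bf A u u - a * b * bf A u x - a * b * bf A x u + a ^+ 2 * bf A x x.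
Proof.
rewrite /bf !mulr_sumr -!sumrB -!big_split /=; apply: eq_bigr => p _.
rewrite !mulr_sumr -!sumrB -!big_split /=; apply: eq_bigr => q _.
rewrite !mxE; ring.
Qed.

Lemma sq_eq0 x : sq x = 0 -> x = 0.
Proof.
move=> h; apply/matrixP => p j; rewrite (ord1 j) mxE.
have := h; rewrite /sq => /eqP; rewrite psumr_eq0 => [/allP H|i _]; last exact: sqr_ge0.
have := H p (mem_index_enum p); rewrite implyTb sqrf_eq0 => /eqP //.
Qed.

Lemma vnorm2E x : vnorm2 x = Num.sqrt (sq x).
Proof. by []. Qed.

Lemma unit_from A eta : (forall p q, A p q = A q p) -> 0 < eta ->
  (forall x, eta * sq x <= bf A x x) -> A \in unitmx.
Proof.
move=> hA e0 Hlow.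
rewrite -row_free_unit -kermx_eq0; apply/eqP.
set K := kermx A.
have KA : K *m A = 0 by exact: mulmx_ker.
apply/row_matrixP => i; rewrite row0.
set z := row i K.
have zA : z *m A = 0 by rewrite /z -row_mul KA row0.
have Ax : A *m z^T = 0.
  have -> : A = A^T by apply/matrixP => p q; rewrite mxE hA.
  by rewrite -trmx_mul zA trmx0.
have : eta * sq z^T <= 0.
  by apply: (le_trans (Hlow _)); rewrite bfE Ax big1 // => p _; rewrite !mxE mulr0.
have s0 := sq_ge0 z^T.
move=> h; have : sq z^T = 0 by apply/eqP; rewrite eq_le s0 andbT -(pmulr_rle0 _ e0).
by move/sq_eq0 => /(congr1 trmx); rewrite trmxK trmx0.
Qed.

Lemma sqrt1E (s : R) : 0 <= s -> Num.sqrt s = 1 -> s = 1.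
Proof. by move=> s0 h; rewrite -(sqr_sqrtr s0) h expr1n. Qed.

Lemma opA_bound A eta M : (forall p q, A p q = A q p) -> 0 < eta ->
  (forall x, eta * sq x <= bf A x x) -> (forall x, bf A x x <= M * sq x) ->
  forall x, sq x = 1 -> sq (A *m x) <= M ^+ 2.
Proof.
move=> hA e0 Hlow Hup x sx.
set u := A *m x.
have Qx : eta <= bf A x x by have := Hlow x; rewrite sx mulr1.
have QxM : bf A x x <= M by have := Hup x; rewrite sx mulr1.
have e1 : bf A u x = sq u.
  by rewrite bfE /sq; apply: eq_bigr => p _; rewrite expr2.
have Qu := Hup u.
have Qu0 := Hlow u.
have su0 := sq_ge0 u.
have cs : bf A u x ^+ 2 <= bf A u u * bf A x x.
  set a := bf A u x; set b := bf A x x.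
  have := Hlow (b *: u - a *: x).
  rewrite bf_comb (bf_sym _ x u hA) -/a -/b.
  have := sq_ge0 (b *: u - a *: x) => h0 h1.
  have h2 : 0 <= b * (b * bf A u u - a ^+ 2).
    have -> : b * (b * bf A u u - a ^+ 2) = b ^+ 2 * bf A u u - a * b * a - a * b * a + a ^+ 2 * b by ring.
    apply: le_trans h1; apply: mulr_ge0 => //; exact: ltW.
  have b0 : 0 < b by rewrite /b; lra.
  rewrite pmulr_rge0 // subr_ge0 in h2.
  by rewrite mulrC.
rewrite e1 in cs.
have M0 : 0 < M by lra.
have cs2 : sq u ^+ 2 <= M * sq u * M.
  apply: (le_trans cs); apply: ler_pM => //.
  - apply: le_trans Qu0; apply: mulr_ge0 => //; exact: ltW.
  - lra.
have [hs|hs] := ltrP 0 (sq u).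
  rewrite expr2 in cs2; rewrite expr2; nra.
have -> : sq u = 0 by apply/eqP; rewrite eq_le hs su0.
by rewrite expr2; apply: mulr_ge0; lra.
Qed.

Lemma opInv_bound A eta : 0 < eta -> A \in unitmx ->
  (forall x, eta * sq x <= bf A x x) ->
  forall y, sq y = 1 -> sq (invmx A *m y) <= (eta ^-1) ^+ 2.
Proof.
move=> e0 hU Hlow y sy.
set x := invmx A *m y.
have Ax : A *m x = y by rewrite /x mulmxA mulmxV // mul1mx.
have h1 := Hlow x.
have h2 : bf A x x <= eta / 2 * sq x + (2 * eta)^-1 * sq y.
  rewrite bfE Ax /sq !mulr_sumr -big_split /=; apply: ler_sum => p _.
  have := sqr_ge0 (eta * x p 0 - y p 0).
  have ei : eta * eta^-1 = 1 by rewrite mulfV // gt_eqF.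
  move=> hh.
  have : 0 <= (2 * eta)^-1 * (eta * x p 0 - y p 0) ^+ 2.
    by apply: mulr_ge0 => //; rewrite invr_ge0; lra.
  have -> : (2 * eta)^-1 * (eta * x p 0 - y p 0) ^+ 2 =
     eta / 2 * x p 0 ^+ 2 + (2 * eta)^-1 * y p 0 ^+ 2 - x p 0 * y p 0.
    by field; rewrite gt_eqF.
  lra.
rewrite sy mulr1 in h2.
have : eta / 2 * sq x <= (2 * eta)^-1 by lra.
have -> : (eta ^-1) ^+ 2 = (2 * eta)^-1 / (eta / 2) by field; rewrite gt_eqF.
move=> h; rewrite ler_pdivlMr; last lra.
by rewrite mulrC.
Qed.

Lemma sup_bounds (E : set R) M e0 : E e0 -> 0 <= e0 ->
  (forall e, E e -> e <= M) -> 0 <= sup E /\ sup E <= M.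
Proof.
move=> He0 e00 HM.
have hs : has_sup E by split; [exists e0 | exists M => e He; exact: HM].
split; first by apply: le_trans e00 _; exact: sup_upper_bound.
by apply: ge_sup; [exists e0 | move=> e He; exact: HM].
Qed.

Lemma sqrt_le (s M : R) : 0 <= M -> s <= M ^+ 2 -> Num.sqrt s <= M.
Proof.
move=> M0 h; rewrite -(ger0_norm M0) -sqrtr_sqr ler_sqrt //; exact: sqr_ge0.
Qed.

Lemma cond_bound A eta M (p0 : 'I_N) : (forall p q, A p q = A q p) -> 0 < eta ->
  (forall x, eta * sq x <= bf A x x) -> (forall x, bf A x x <= M * sq x) ->
  A \in unitmx /\ cond2 A <= M / eta.
Proof.
move=> hA e0 Hlow Hup.
have hU := @unit_from A eta hA e0 Hlow.
split => //.
pose x0 : 'cV[R]_N := \col_p (p == p0)%:R.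
have sx0 : sq x0 = 1.
  rewrite /sq (bigD1 p0) //= big1 => [|p hp]; rewrite !mxE ?eqxx ?(negbTE hp) /=.
    by rewrite expr1n addr0.
  by rewrite expr0n.
have vx0 : vnorm2 x0 = 1 by rewrite vnorm2E sx0 sqrtr1.
have eM : eta <= M.
  have := le_trans (Hlow x0) (Hup x0); rewrite sx0 !mulr1 //.
have M0 : 0 <= M by lra.
have [n1 n2] : 0 <= opnorm2 A /\ opnorm2 A <= M.
  apply: (@sup_bounds _ _ (vnorm2 (A *m x0))).
  - by exists x0.
  - exact: sqrtr_ge0.
  - move=> e [x hx <-]; rewrite vnorm2E; apply: sqrt_le => //.
    apply: (@opA_bound A eta M hA e0 Hlow Hup); apply: sqrt1E => //; exact: sq_ge0.
have ei0 : 0 <= eta^-1 by rewrite invr_ge0 ltW.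
have [m1 m2] : 0 <= opnorm2 (invmx A) /\ opnorm2 (invmx A) <= eta^-1.
  apply: (@sup_bounds _ _ (vnorm2 (invmx A *m x0))).
  - by exists x0.
  - exact: sqrtr_ge0.
  - move=> e [x hx <-]; rewrite vnorm2E; apply: sqrt_le => //.
    apply: (@opInv_bound A eta e0 hU Hlow); apply: sqrt1E => //; exact: sq_ge0.
by rewrite /cond2; apply: ler_pM.
Qed.
End Mat.
Arguments dot {R d}.
Arguments bf {R N}.
Arguments sq {R N}.
Arguments psd_core {R n d}.
Arguments dotZr {R d}.
Arguments dotZZ {R d}.
Arguments PB2 {R d}.
Section KT.
Variable R : realType.
Variables (n d : nat) (X : 'M[R]_(n, d)) (gamma : 'rV[R]_d).

Notation N := (\sum_(i < d.+1) n)%N.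
Definition Rk (i : 'I_d.+1) (a : 'I_n) : 'I_N := @tagnat.Rank _ (fun _ => n) i a.

Lemma sum_reindex (F : 'I_N -> R) :
  \sum_(p < N) F p = \sum_(i < d.+1) \sum_(a < n) F (Rk i a).
Proof.
rewrite (reindex (@tagnat.rank _ (fun _ => n))) /=; last exact: tagnat.rank_bij_on.
rewrite [RHS]sig_big_dep /=.
by apply: eq_bigr => -[i a] _.
Qed.

Lemma Kt_entry i j a b : Ktilde X gamma (Rk i a) (Rk j b) = Kblock X gamma i j a b.
Proof.
rewrite /Ktilde mxE /Rk /tagnat.sig1 /tagnat.sig2 /tagnat.Rank !tagnat.rankK /=.
by [].
Qed.

Lemma Kg_sym a b : Kg X gamma a b = Kg X gamma b a.
Proof. by rewrite /Kg; congr expR; congr (_ * _); apply: eq_bigr => j _; ring. Qed.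

Lemma Rt_anti j a b : Rt X gamma j a b = - Rt X gamma j b a.
Proof. rewrite /Rt; ring. Qed.

Lemma Kblock_sym i j a b : Kblock X gamma i j a b = Kblock X gamma j i b a.
Proof.
rewrite !mxE Kg_sym.
case: (unlift ord0 i) => [i'|]; case: (unlift ord0 j) => [j'|] //.
- rewrite eq_sym !(Rt_anti _ a b); ring.
- rewrite (Rt_anti _ a b); ring.
- rewrite (Rt_anti _ a b); ring.
Qed.

Lemma Kt_sym p q : Ktilde X gamma p q = Ktilde X gamma q p.
Proof. by rewrite /Ktilde mxE [RHS]mxE Kblock_sym. Qed.

Section Y.
Variable y : 'I_d.+1 -> 'I_n -> R.
Definition vv a := y ord0 a.
Definition ww a := fun j : 'I_d => y (lift ord0 j) a.
Definition rr a b := fun j : 'I_d => Rt X gamma j a b.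

Definition Tp a b := \sum_(i < d.+1) \sum_(j < d.+1) y i a * Kblock X gamma i j a b * y j b.

Lemma sum_delta (F : 'I_d -> R) (i : 'I_d) : \sum_(j < d) (i == j)%:R * F j = F i.
Proof.
rewrite (bigD1 i) //= eqxx mul1r big1 ?addr0 // => j hj.
by rewrite eq_sym (negbTE hj) mul0r.
Qed.

Lemma Tp_E a b : Tp a b =
  Kg X gamma a b * ((vv a - dot (rr a b) (ww a)) * (vv b + dot (rr a b) (ww b)) + dot (ww a) (ww b)).
Proof.
rewrite /Tp big_ord_recl big_ord_recl.
under [X in _ + X]eq_bigr => i _ do rewrite big_ord_recl.
rewrite !mxE /= !unlift_none.
under eq_bigr => j _ do rewrite !mxE liftK unlift_none.
under [X in _ + X]eq_bigr => i _ do (rewrite !mxE liftK unlift_none;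
   under eq_bigr => j _ do rewrite !mxE !liftK).
rewrite big_split /=.
set K := Kg X gamma a b.
have e1 : \sum_(j < d) y ord0 a * (Rt X gamma j a b * K) * y (lift ord0 j) b =
          vv a * K * dot (rr a b) (ww b).
  by rewrite /dot mulr_sumr; apply: eq_bigr => j _; rewrite /vv /ww /rr; ring.
have e2 : \sum_(i < d) y (lift ord0 i) a * - (Rt X gamma i a b * K) * y ord0 b =
          - (vv b * K * dot (rr a b) (ww a)).
  by rewrite /dot mulr_sumr -sumrN; apply: eq_bigr => j _; rewrite /vv /ww /rr; ring.
have e3 : \sum_(i < d) \sum_(j < d) y (lift ord0 i) a *
            (((i == j)%:R - Rt X gamma i a b * Rt X gamma j a b) * K) * y (lift ord0 j) b =
          K * (dot (ww a) (ww b) - dot (rr a b) (ww a) * dot (rr a b) (ww b)).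
  transitivity (\sum_(i < d) (K * (ww a i * ww b i) - K * (rr a b i * ww a i) * dot (rr a b) (ww b))).
    apply: eq_bigr => i _.
    have -> : \sum_(j < d) y (lift ord0 i) a * (((i == j)%:R - Rt X gamma i a b * Rt X gamma j a b) * K) *
                y (lift ord0 j) b =
              y (lift ord0 i) a * K * \sum_(j < d) (i == j)%:R * y (lift ord0 j) b
              - y (lift ord0 i) a * K * Rt X gamma i a b * \sum_(j < d) Rt X gamma j a b * y (lift ord0 j) b.
      rewrite !mulr_sumr -sumrB; apply: eq_bigr => j _; ring.
    by rewrite sum_delta /ww /rr /dot; ring.
  rewrite sumrB -mulr_suml -!mulr_sumr /dot; ring.
rewrite e1 e2 e3 /vv; ring.
Qed.
End Y.

Definition yof (x : 'cV[R]_N) := fun (i : 'I_d.+1) (a : 'I_n) => x (Rk i a) 0.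

Lemma bf_Kt (x : 'cV[R]_N) :
  bf (Ktilde X gamma) x x = \sum_(a < n) \sum_(b < n) Tp (yof x) a b.
Proof.
rewrite /bf sum_reindex.
under eq_bigr => i _ do under eq_bigr => a _ do rewrite sum_reindex.
under eq_bigr => i _ do under eq_bigr => a _ do
   (under eq_bigr => j _ do under eq_bigr => b _ do rewrite Kt_entry).
under eq_bigr => i _ do under eq_bigr => a _ do rewrite exchange_big.
rewrite exchange_big; apply: eq_bigr => a _.
rewrite exchange_big; apply: eq_bigr => b _.
by rewrite /Tp.
Qed.

Lemma sq_Kt (x : 'cV[R]_N) :
  sq x = \sum_(a < n) (vv (yof x) a ^+ 2 + dot (ww (yof x) a) (ww (yof x) a)).
Proof.
rewrite /sq sum_reindex exchange_big; apply: eq_bigr => a _.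
rewrite (@big_ord_recl R 0 +%R d); congr (_ + _).
Qed.

Definition xs (a : 'I_n) := fun j : 'I_d => xt X gamma a j.
Definition phi (a : 'I_n) := expR (- (1/2) * dot (xs a) (xs a)).

Lemma Kg_split a b : Kg X gamma a b = phi a * phi b * expR (dot (xs a) (xs b)).
Proof.
rewrite /phi -!expRD /Kg; congr expR.
have E : \sum_(j < d) (xt X gamma a j - xt X gamma b j) ^+ 2 =
         dot (xs a) (xs a) + dot (xs b) (xs b) - 2 * dot (xs a) (xs b).
  rewrite /dot mulr_sumr -big_split -sumrB /=; apply: eq_bigr => j _; rewrite /xs; ring.
by rewrite E; field.
Qed.

Lemma Tp_psd (y : 'I_d.+1 -> 'I_n -> R) : 0 <= \sum_(a < n) \sum_(b < n) Tp y a b.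
Proof.
pose P a := phi a * (vv y a - dot (xs a) (ww y a)).
pose W a := fun j : 'I_d => phi a * ww y a j.
have := psd_core xs P W.
congr (_ <= _); apply: eq_bigr => a _; apply: eq_bigr => b _.
rewrite Tp_E Kg_split.
have h1 : dot (rr a b) (ww y a) = dot (xs a) (ww y a) - dot (xs b) (ww y a).
  by rewrite /dot -sumrB; apply: eq_bigr => j _; rewrite /rr /Rt /xs; ring.
have h2 : dot (rr a b) (ww y b) = dot (xs a) (ww y b) - dot (xs b) (ww y b).
  by rewrite /dot -sumrB; apply: eq_bigr => j _; rewrite /rr /Rt /xs; ring.
rewrite h1 h2 /W dotZr dotZr dotZZ /P; ring.
Qed.

Lemma Tp_diag (y : 'I_d.+1 -> 'I_n -> R) a :
  Tp y a a = vv y a ^+ 2 + dot (ww y a) (ww y a).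
Proof.
rewrite Tp_E.
have -> : Kg X gamma a a = 1.
  rewrite /Kg big1 ?mulr0 ?expR0 // => j _; by rewrite subrr expr0n.
have -> : dot (rr a a) (ww y a) = 0 by rewrite /dot big1 // => j _; rewrite /rr /Rt subrr mul0r.
rewrite expr2; ring.
Qed.

Lemma Tp_UB (y : 'I_d.+1 -> 'I_n -> R) : (0 < d)%N ->
  \sum_(a < n) \sum_(b < n) Tp y a b <=
  (1 + (n%:R - 1) * cst R d) * \sum_(a < n) (vv y a ^+ 2 + dot (ww y a) (ww y a)).
Proof.
move=> d0.
set c := cst R d.
pose Y a := vv y a ^+ 2 + dot (ww y a) (ww y a).
have step a b : Tp y a b <= c / 2 * (Y a + Y b).
  rewrite Tp_E /Y.
  have -> : Kg X gamma a b = expR (- (1/2) * dot (rr a b) (rr a b)).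
    by rewrite /Kg /dot; congr expR; congr (_ * _); apply: eq_bigr => j _; rewrite /rr /Rt expr2.
  have := PB2 (rr a b) (ww y a) (ww y b) (vv y a) (vv y b) d0.
  by rewrite !addrA.
have H1 : \sum_(a < n) \sum_(b < n) Tp y a b <=
          \sum_(a < n) (Y a + c / 2 * \sum_(b < n | b != a) (Y a + Y b)).
  apply: ler_sum => a _; rewrite (bigD1 a) //= Tp_diag; apply: lerD => //.
  rewrite mulr_sumr; apply: ler_sum => b _; exact: step.
apply: (le_trans H1); rewrite le_eqVlt; apply/orP; left; apply/eqP.
have hD a : \sum_(b < n | b != a) (Y a + Y b) = n%:R * Y a + \sum_(b < n) Y b - (Y a + Y a).
  have E := bigD1 (F := fun b => Y a + Y b) a isT.
  have E2 : \sum_(b < n) (Y a + Y b) = n%:R * Y a + \sum_(b < n) Y b.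
    by rewrite big_split /= sumr_const card_ord mulr_natl.
  rewrite -E2 E /=; ring.
under eq_bigr => a _ do rewrite hD.
have -> : \sum_(a < n) (Y a + c / 2 * (n%:R * Y a + \sum_(b < n) Y b - (Y a + Y a))) =
          \sum_(a < n) (Y a * (1 + c / 2 * (n%:R - 2)) + c / 2 * \sum_(b < n) Y b).
  by apply: eq_bigr => a _; ring.
rewrite big_split /= -mulr_suml sumr_const card_ord -mulr_natl; by field.
Qed.
End KT.

Local Close Scope classical_set_scope.

Theorem mainTheorem3 (R : realType) (n d : nat) (kmax : R)
  (X : 'M[R]_(n, d)) (gamma : 'rV[R]_d) :
  (0 < n)%N -> (0 < d)%N -> 1 < kmax ->
  (forall j : 'I_d, 0 < gamma 0 j) ->
  let A := Ktilde X gamma + eta_K n d kmax *: 1%:M in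
  A \in unitmx /\ cond2 A <= kmax.
Proof.
move=> n0 d0 hk hg A.
set eta := eta_K n d kmax.
set c := cst R d.
have ec : eta = (1 + (n%:R - 1) * c) / (kmax - 1).
  by rewrite /eta /eta_K /c /cst !mulrA.
have c1 : 1 <= c := cst_ge1 R d d0.
have n1 : 1 <= (n%:R : R) by rewrite ler1n.
have pos : 0 < 1 + (n%:R - 1) * c.
  have : 0 <= (n%:R - 1) * c by apply: mulr_ge0; lra.
  lra.
have e0 : 0 < eta by rewrite ec; apply: divr_gt0 => //; lra.
pose a0 : 'I_n := Ordinal n0.
pose M := 1 + (n%:R - 1) * c + eta.
have Aent p q : A p q = Ktilde X gamma p q + eta * (p == q)%:R by rewrite !mxE.
have hsym p q : A p q = A q p by rewrite !Aent Kt_sym eq_sym.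
have bfA x : bf A x x = bf (Ktilde X gamma) x x + eta * sq x.
  rewrite /bf /sq mulr_sumr -big_split /=; apply: eq_bigr => p _.
  under eq_bigr => q _ do rewrite Aent mulrDr mulrDl.
  rewrite big_split /=; congr (_ + _).
  rewrite (bigD1 p) //= [X in _ + X](_ : _ = 0); first by rewrite eqxx /= addr0 mulr1 expr2; ring.
  by apply: big1 => q hq; rewrite eq_sym (negbTE hq) /=; rewrite mulr0 mulr0 mul0r.
have Hlow x : eta * sq x <= bf A x x.
  by rewrite bfA bf_Kt; have := Tp_psd _ _ _ X gamma (yof _ _ _ x); lra.
have Hup x : bf A x x <= M * sq x.
  rewrite bfA bf_Kt /M mulrDl; apply: lerD => //.
  by rewrite sq_Kt; exact: Tp_UB.
have [hU hc] := @cond_bound _ _ A eta M (Rk _ _ ord0 a0) hsym e0 Hlow Hup.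
split => //; apply: (le_trans hc); rewrite /M ec le_eqVlt; apply/orP; left; apply/eqP.
have : kmax - 1 != 0 by rewrite subr_eq0 gt_eqF.
have : 1 + (n%:R - 1) * c != 0 by rewrite gt_eqF.
move=> h1 h2; field; by rewrite h1 h2.
Qed.
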